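(* Let $\langle\cdot\rangle$ satisfy (A1) (the shifts $a\mapsto a(\cdot+z)$, $z\in\mathbb Z^d$, preserve $\langle\cdot\rangle$), and let $G_T$ be the Green's function. Then for all $T>0$, $a\in\Omega$ and $b\in\mathbb B^d$, $$1+\frac{a(b)}{1-a(b)\nabla\nabla G_T(a,b,b)}\le K\,\omega_0^2(a,b),$$ where $K$ depends only on $d$.
   Context: $\mathbb B^d$ is the set of nearest-neighbour bonds of $\mathbb Z^d$; $x_b,y_b$ endpoints of $b$ with $y_b-x_b\in\{e_1,\dots,e_d\}$; $\nabla u(b)=u(y_b)-u(x_b)$, $\nabla^*F(x)=\sum_i(F(\{x-e_i,x\})-F(\{x,x+e_i\}))$. $\Omega=[0,1]^{\mathbb B^d}$. Green's function: $x\mapsto G_T(a,x,y)$ is the unique $\ell^2(\mathbb Z^d)$ solution of $\frac1TG_T(a,\cdot,y)+\nabla^*(a\nabla G_T(a,\cdot,y))=\delta(\cdot-y)$; $\nabla\nabla G_T(a,b,b)=G_T(a,y_b,y_b)-G_T(a,x_b,y_b)-G_T(a,y_b,x_b)+G_T(a,x_b,x_b)$. Chemical distance $\mathrm{dist}_a(x,y)=\inf\{\sum_{b\in\pi}a(b)^{-1}:\pi$ a path from $x$ to $y\}$ with $1/0=\infty$; $\omega(a,b)=\mathrm{dist}_a(x_b,y_b)^{d+2}$; $a^{b,0}$ is $a$ with $a(b)$ replaced by $0$; $\omega_0(a,b)=\omega(a^{b,0},b)\in[1,\infty]$. *)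

(* Defs.v *)
From HB Require Import structures.
From mathcomp Require Import all_boot all_order all_algebra.
From mathcomp Require Import all_classical all_reals all_analysis.
Set Implicit Arguments. Unset Strict Implicit. Unset Printing Implicit Defensive.
Import Order.TTheory GRing.Theory Num.Theory.
Local Open Scope ring_scope.

(* Points of Z^d are integer row vectors; a bond is (x, i) : the bond {x, x + e_i}. *)
Definition point (d : nat) := 'rV[int]_d.
Definition bond (d : nat) := ('rV[int]_d * 'I_d)%type.
Definition unitv (d : nat) (i : 'I_d) : 'rV[int]_d := delta_mx 0 i.
Definition xb (d : nat) (b : bond d) : 'rV[int]_d := b.1.
Definition yb (d : nat) (b : bond d) : 'rV[int]_d := b.1 + unitv b.2.

Definition in_Omega (R : realType) (d : nat) (a : bond d -> R) : Prop :=
  forall b, 0 <= a b <= 1.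

Definition grad (R : realType) (d : nat) (u : 'rV[int]_d -> R) (b : bond d) : R :=
  u (yb b) - u (xb b).

Definition divstar (R : realType) (d : nat) (F : bond d -> R) (x : 'rV[int]_d) : R :=
  \sum_(i < d) (F (x - unitv i, i) - F (x, i)).

Definition is_green (R : realType) (d : nat) (T : R) (a : bond d -> R)
    (G : 'rV[int]_d -> 'rV[int]_d -> R) : Prop :=
  forall y : 'rV[int]_d,
    (\esum_(x in [set: 'rV[int]_d]) ((G x y) ^+ 2)%:E < +oo)%E /\
    forall x : 'rV[int]_d,
      T^-1 * G x y + divstar (fun b => a b * grad (G ^~ y) b) x
      = (if x == y then 1 else 0).

Definition gradgradG (R : realType) (d : nat) (G : 'rV[int]_d -> 'rV[int]_d -> R)
    (b : bond d) : R :=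
  G (yb b) (yb b) - G (xb b) (yb b) - G (yb b) (xb b) + G (xb b) (xb b).

Fixpoint walk (d : nat) (x y : 'rV[int]_d) (s : seq (bond d)) : Prop :=
  match s with
  | [::] => x = y
  | b :: s' => (xb b = x /\ walk (yb b) y s') \/ (yb b = x /\ walk (xb b) y s')
  end.

Definition bcost (R : realType) (d : nat) (a : bond d -> R) (b : bond d) : \bar R :=
  if a b == 0 then +oo%E else ((a b)^-1)%:E.

Definition dist_a (R : realType) (d : nat) (a : bond d -> R) (x y : 'rV[int]_d) : \bar R :=
  ereal_inf [set c | exists s, walk x y s /\ c = (\sum_(b <- s) bcost a b)%E].

Definition omega (R : realType) (d : nat) (a : bond d -> R) (b : bond d) : \bar R :=
  (dist_a a (xb b) (yb b) ^+ d.+2)%E.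

Definition zero_at (R : realType) (d : nat) (a : bond d -> R) (b : bond d) : bond d -> R :=
  fun b' => if b' == b then 0 else a b'.

Definition omega0 (R : realType) (d : nat) (a : bond d -> R) (b : bond d) : \bar R :=
  omega (zero_at a b) b.

(* Main.v *)
Require Import Defs.
From HB Require Import structures.
From mathcomp Require Import all_boot all_order all_algebra.
From mathcomp Require Import all_classical all_reals all_analysis.
From mathcomp Require Import ring lra.
Import Order.TTheory GRing.Theory Num.Theory.
Local Open Scope ring_scope.

Section Gen.
Variable R : realType.

Lemma sub_sum (T : eqType) (h : T -> R) (s' s : seq T) :
  uniq s' -> {subset s' <= s} -> (forall x, x \in s -> 0 <= h x) ->
  \sum_(x <- s') h x <= \sum_(x <- s) h x.
Proof.
elim: s s' => [|x s IH] s' us' sub h0.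
  have -> : s' = [::] by case: s' us' sub => // y ? _ /(_ y); rewrite mem_head in_nil => /(_ isT).
  by rewrite big_nil.
rewrite big_cons; case: (boolP (x \in s')) => xs.
  rewrite (perm_big _ (perm_to_rem xs)) big_cons lerD2l; apply: IH.
  - exact: rem_uniq.
  - move=> z; rewrite (mem_rem_uniq _ us') => /andP[zx zs].
    by have := sub z zs; rewrite in_cons (negbTE zx).
  - by move=> z zs; apply: h0; rewrite in_cons zs orbT.
rewrite -[X in X <= _]add0r; apply: lerD; first by apply: h0; rewrite mem_head.
apply: IH => //.
- move=> z zs; have := sub z zs; rewrite in_cons => /orP[/eqP zx|//].
  by subst; rewrite zs in xs.
- by move=> z zs; apply: h0; rewrite in_cons zs orbT.
Qed.

Lemma sum_shift (V : zmodType) (B L : seq V) (v : V) (h : V -> R) :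
  uniq B -> uniq L -> (forall z, z \in B -> z - v \in L) ->
  \sum_(z <- B) h z = \sum_(w <- L) (if w + v \in B then h (w + v) else 0).
Proof.
move=> uB uL hBL.
rewrite -big_mkcond /= -[RHS]big_filter; set Lf := seq.filter _ L.
have P : perm_eq [seq z - v | z <- B] Lf.
  apply: uniq_perm.
  - by rewrite map_inj_uniq // => x y /addIr.
  - exact: filter_uniq.
  - move=> w; rewrite mem_filter; apply/mapP/andP => [[z zB ->]|[wB wL]].
      by rewrite subrK zB; split => //; apply: hBL.
    by exists (w + v) => //; rewrite addrK.
rewrite -(perm_big _ P) /= big_map; apply: eq_bigr => z _; by rewrite subrK.
Qed.

Lemma sum_pick (T : eqType) (B : seq T) y (f : T -> R) :
  uniq B -> y \in B -> \sum_(z <- B) (if z == y then f z else 0) = f y.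
Proof.
move=> uB yB; rewrite -big_mkcond -big_filter.
have -> : [seq z <- B | z == y] = [:: y] by apply: filter_pred1_uniq.
by rewrite big_seq1.
Qed.

Lemma tail_esum (T : choiceType) (f : T -> R) : (forall x, 0 <= f x) ->
  (\esum_(x in [set: T]) (f x)%:E < +oo)%E -> forall e, 0 < e ->
  exists F : seq T, forall M, uniq M -> (forall z, z \in M -> z \notin F) ->
    \sum_(z <- M) f z <= e.
Proof.
move=> f0 fin e e0.
set s := esum _ _ in fin *.
have s0 : (0 <= s)%E by apply: esum_ge0 => x _; rewrite lee_fin.
have sfin : s \is a fin_num by rewrite ge0_fin_numE.
have : ((fine s - e)%:E < s)%E by rewrite -[X in (_ < X)%E](fineK sfin) lte_fin ltrBlDr ltrDl.
case/ereal_sup_gt => y [A [finA _] Ey] lt.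
pose F := finmap.enum_fset (fset_set A).
exists F => M uM dis.
have uFM : uniq (F ++ M).
  rewrite cat_uniq uM finmap.fset_uniq /= andbT; apply/hasPn => z zM; exact: dis.
have : (\sum_(z <- F ++ M) (f z)%:E <= s)%E.
  rewrite fsbig_seq //; apply: ereal_sup_ubound; exists [set` (F ++ M)]%classic => //.
rewrite big_cat /= -fsbig_finite // Ey.
move: lt; rewrite -[s](fineK sfin) sumEFin.
have -> : y = (fine y)%:E.
  by rewrite -Ey fsumEFin.
rewrite lte_fin -EFinD lee_fin; lra.
Qed.

End Gen.
Section Walk.
Variables (R : realType) (d : nat).
Implicit Types (s : seq (bond d)) (x y z : 'rV[int]_d).

Lemma walk_tel (u : 'rV[int]_d -> R) s x y : walk x y s ->
  `|u y - u x| <= \sum_(b <- s) `|grad u b|.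
Proof.
elim: s x => [|b s IH] x /=.
  by move=> ->; rewrite subrr normr0 big_nil.
rewrite big_cons /grad => -[[<- w]|[<- w]].
  have := IH _ w.
  rewrite (_ : u y - u (xb b) = (u (yb b) - u (xb b)) + (u y - u (yb b))); last by ring.
  move=> h; apply: le_trans (ler_normD _ _) _; exact: lerD.
have := IH _ w.
rewrite (_ : u y - u (yb b) = - (u (yb b) - u (xb b)) + (u y - u (xb b))); last by ring.
move=> h; apply: le_trans (ler_normD _ _) _; rewrite normrN; exact: lerD.
Qed.

Lemma walk_split s z y c : walk z y s -> c \in s ->
  exists p q, s = p ++ c :: q /\ (walk (yb c) y q \/ walk (xb c) y q).
Proof.
elim: s z => [|c' s IH] z //= w; rewrite in_cons => /orP[/eqP Ec|cs].
  subst; exists [::], s; split=> //; case: w => [[_ w]|[_ w]]; [left|right]; done.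
case: w => [[_ w]|[_ w]]; have [p [q [-> H]]] := IH _ w cs;
  by exists (c' :: p), q; split.
Qed.

Arguments walk_split {s z y c}.

Lemma walk_erase s x y : walk x y s ->
  exists s', [/\ walk x y s', uniq s' & {subset s' <= s}].
Proof.
elim: s x => [|c s IH] x /=.
  by move=> ->; exists [::]; split.
have subc : forall s2 t, {subset s2 <= s} -> t \in s2 -> t \in c :: s.
  by move=> s2 t sub zs; rewrite in_cons (sub _ zs) orbT.
case=> [[ex w]|[ey w]]; have [s2 [w2 u2 sub2]] := IH _ w;
    (case: (boolP (c \in s2)) => cs2; last first).
- exists (c :: s2); split => //=; [by left| by rewrite cs2 u2|].
  by move=> t; rewrite in_cons => /orP[/eqP->|zs]; [rewrite mem_head|exact: subc zs].
- have [p [q [E [wq|wq]]]] := walk_split w2 cs2;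
    move: u2; rewrite E cat_uniq => /and3P[_ _ ucq].
    exists (c :: q); split => //; first by left.
    move=> t; rewrite in_cons => /orP[/eqP->|zq]; first by rewrite mem_head.
    by apply: (subc s2) => //; rewrite E mem_cat in_cons zq !orbT.
  exists q; split => //; first by rewrite -ex.
    by case/andP: ucq.
  by move=> t zq; apply: (subc s2) => //; rewrite E mem_cat in_cons zq !orbT.
- exists (c :: s2); split => //=; [by right| by rewrite cs2 u2|].
  by move=> t; rewrite in_cons => /orP[/eqP->|zs]; [rewrite mem_head|exact: subc zs].
- have [p [q [E [wq|wq]]]] := walk_split w2 cs2;
    move: u2; rewrite E cat_uniq => /and3P[_ _ ucq].
    exists q; split => //; first by rewrite -ey.
      by case/andP: ucq.
    by move=> t zq; apply: (subc s2) => //; rewrite E mem_cat in_cons zq !orbT.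
  exists (c :: q); split => //; first by right.
  move=> t; rewrite in_cons => /orP[/eqP->|zq]; first by rewrite mem_head.
  by apply: (subc s2) => //; rewrite E mem_cat in_cons zq !orbT.
Qed.

Lemma costE (a : bond d -> R) s : (forall b, 0 <= a b) ->
  (\sum_(b <- s) bcost a b = +oo)%E \/
  ((forall b, b \in s -> a b != 0) /\
   \sum_(b <- s) bcost a b = (\sum_(b <- s) (a b)^-1)%:E).
Proof.
move=> ha; elim: s => [|c s IH].
  by right; split => //; rewrite !big_nil.
rewrite !big_cons {1 3}/bcost; case: eqP => ac.
  left; apply: addye.
  have : (0 <= \sum_(b <- s) bcost a b)%E.
    apply: sume_ge0 => b _; rewrite /bcost; case: eqP => // _.
    by rewrite lee_fin invr_ge0.
  by case: (\sum_(b <- s) bcost a b).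
case: IH => [->|[nz ->]]; first by left; rewrite addey.
right; split; last by rewrite EFinD.
by move=> b; rewrite in_cons => /orP[/eqP->|]; [apply/eqP|apply: nz].
Qed.

End Walk.
Section Energy.
Variables (R : realType) (d : nat).
Local Notation P := 'rV[int]_d.

Lemma energy (T : R) (a : bond d -> R) (u : P -> R) (x0 y0 : P) :
  0 < T -> in_Omega a ->
  (forall z, T^-1 * u z + divstar (fun b => a b * grad u b) z =
     (if z == y0 then 1 else 0) - (if z == x0 then 1 else 0)) ->
  (forall e, 0 < e -> exists F : seq P, forall M, uniq M ->
     (forall z, z \in M -> z \notin F) -> \sum_(z <- M) u z ^+ 2 <= e) ->
  forall S : seq (bond d), uniq S ->
  \sum_(b <- S) a b * grad u b ^+ 2 <= u y0 - u x0.
Proof.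
move=> T0 hO heq tl S uS.
have a0 : forall b, 0 <= a b by move=> b; case/andP: (hO b).
have a1 : forall b, a b <= 1 by move=> b; case/andP: (hO b).
set g := u y0 - u x0.
suff H : forall e, 0 < e -> \sum_(b <- S) a b * grad u b ^+ 2 <= g + 4 * d%:R * e.
  apply/ler_addgt0Pr => e e0.
  pose e' := e / (4 * d%:R + 1).
  have D0 : 0 <= d%:R :> R by [].
  have den : 0 < 4 * d%:R + 1 :> R by lra.
  have e'0 : 0 < e' by rewrite divr_gt0.
  have E : (4 * d%:R + 1) * e' = e by rewrite /e' mulrC divfK // gt_eqF.
  apply: le_trans (H _ e'0) _; rewrite lerD2l; nra.
move=> e e0.
have [F1 hF1] := tl e e0.
pose ends := [seq xb b | b <- S] ++ [seq yb b | b <- S].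
pose F0 := F1 ++ [:: x0, y0 & ends].
pose nb := [seq z + unitv i | z <- F0, i <- index_enum 'I_d] ++
           [seq z - unitv i | z <- F0, i <- index_enum 'I_d].
pose B := undup (F0 ++ nb).
pose L := undup (B ++ [seq z - unitv i | z <- B, i <- index_enum 'I_d]).
have uB : uniq B := undup_uniq _.
have uL : uniq L := undup_uniq _.
have PB1 : forall z, z \in F0 -> z \in B by move=> z zF; rewrite mem_undup mem_cat zF.
have PB2 : forall z i, z \in F0 -> z + unitv i \in B.
  move=> z i zF; rewrite mem_undup mem_cat; apply/orP; right; rewrite mem_cat; apply/orP; left.
  by apply: (allpairs_f (fun z i => z + unitv i)) => //; rewrite mem_index_enum.
have PB3 : forall z i, z \in F0 -> z - unitv i \in B.
  move=> z i zF; rewrite mem_undup mem_cat; apply/orP; right; rewrite mem_cat; apply/orP; right.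
  by apply: (allpairs_f (fun z i => z - unitv i)) => //; rewrite mem_index_enum.
have PL1 : forall z, z \in B -> z \in L by move=> z zF; rewrite mem_undup mem_cat zF.
have PL2 : forall z i, z \in B -> z - unitv i \in L.
  move=> z i zF; rewrite mem_undup mem_cat; apply/orP; right.
  by apply: (allpairs_f (fun z i => z - unitv i)) => //; rewrite mem_index_enum.
have PS : forall b, b \in S -> xb b \in F0 /\ yb b \in F0.
  move=> b bS; rewrite /F0 !mem_cat !in_cons /ends !mem_cat.
  by rewrite (map_f (@xb d) bS) (map_f (@yb d) bS) !orbT.
have hx0 : x0 \in F0 by rewrite /F0 mem_cat !in_cons eqxx orbT.
have hy0 : y0 \in F0 by rewrite /F0 mem_cat !in_cons eqxx !orbT.
have F1sub : forall z, z \notin F0 -> z \notin F1.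
  by move=> z; apply: contra; rewrite mem_cat => ->.
pose psi z := if z \in B then u z else 0.
have I1 : \sum_(z <- B) u z * (T^-1 * u z + divstar (fun b => a b * grad u b) z) = g.
  transitivity (\sum_(z <- B) ((if z == y0 then u z else 0) - (if z == x0 then u z else 0))).
    by apply: eq_bigr => z _; rewrite heq; case: (z == y0); case: (z == x0); ring.
  by rewrite sumrB (@sum_pick R _ _ y0 u uB (PB1 _ hy0)) (@sum_pick R _ _ x0 u uB (PB1 _ hx0)).
have I2 : \sum_(z <- B) u z * divstar (fun b => a b * grad u b) z =
  \sum_(i < d) \sum_(w <- L) a (w, i) * grad u (w, i) * (psi (w + unitv i) - psi w).
  rewrite /divstar.
  under eq_bigr => z _ do rewrite mulr_sumr.
  rewrite exchange_big /=; apply: eq_bigr => i _.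
  under eq_bigr => z _ do rewrite mulrBr.
  rewrite sumrB.
  have S1 : \sum_(z <- B) u z * (a (z - unitv i, i) * grad u (z - unitv i, i)) =
            \sum_(w <- L) psi (w + unitv i) * (a (w, i) * grad u (w, i)).
    apply: eq_trans (@sum_shift R _ B L (unitv i) _ uB uL _) _.
      by move=> z zB; apply: PL2.
    by apply: eq_bigr => w _; rewrite /psi; case: ifP; rewrite ?addrK ?mul0r.
  have S2 : \sum_(z <- B) u z * (a (z, i) * grad u (z, i)) =
            \sum_(w <- L) psi w * (a (w, i) * grad u (w, i)).
    apply: eq_trans (@sum_shift R _ B L 0 _ uB uL _) _.
      by move=> z zB; rewrite subr0; apply: PL1.
    by apply: eq_bigr => w _; rewrite /psi addr0; case: ifP; rewrite ?mul0r.
  rewrite S1 S2 -sumrB; apply: eq_bigr => w _; ring.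
pose k (b : bond d) := if (xb b \in B) && (yb b \in B) then a b * grad u b ^+ 2 else 0.
pose pen (b : bond d) := (if xb b \in F0 then 0 else 2 * u (xb b) ^+ 2) +
                         (if yb b \in F0 then 0 else 2 * u (yb b) ^+ 2).
have I3 : forall w i, k (w, i) - pen (w, i) <=
    a (w, i) * grad u (w, i) * (psi (w + unitv i) - psi w).
  move=> w i; rewrite /k /pen /psi /grad /xb /yb /=.
  set z' := w + unitv i.
  have ew : (w \in F0) ==> (w \in B) && (z' \in B).
    by apply/implyP => wF; rewrite PB1 // PB2.
  have ez : (z' \in F0) ==> (w \in B) && (z' \in B).
    apply/implyP => zF; rewrite (PB1 _ zF) andbT.
    by have := PB3 _ i zF; rewrite /z' addrK.
  have := a0 (w, i); have := a1 (w, i).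
  have := sqr_ge0 (u w); have := sqr_ge0 (u z').
  have := mulr_ge0 (a0 (w, i)) (sqr_ge0 (u w - u z')).
  have h1a : 0 <= 1 - a (w, i) by rewrite subr_ge0.
  have := mulr_ge0 h1a (sqr_ge0 (u w)).
  have := mulr_ge0 h1a (sqr_ge0 (u z')).
  move: ew ez; case: (w \in B); case: (z' \in B); case: (w \in F0); case: (z' \in F0) => //= _ _;
    nra.
have I4 : forall i : 'I_d, \sum_(w <- L) pen (w, i) <= 4 * e.
  move=> i; rewrite big_split /=.
  have -> : 4 * e = 2 * e + 2 * e by ring.
  apply: lerD.
    have -> : \sum_(w <- L) (if w \in F0 then 0 else 2 * u w ^+ 2) =
              2 * \sum_(w <- [seq w <- L | w \notin F0]) u w ^+ 2.
      rewrite big_filter mulr_sumr [RHS]big_mkcond; apply: eq_bigr => w _.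
      by case: (w \in F0); rewrite ?mulr0.
    rewrite ler_pM2l //; apply: hF1; first exact: filter_uniq.
    by move=> z; rewrite mem_filter => /andP[/F1sub].
  have -> : \sum_(w <- L) (if w + unitv i \in F0 then 0 else 2 * u (w + unitv i) ^+ 2) =
            2 * \sum_(z <- [seq w + unitv i | w <- [seq w <- L | w + unitv i \notin F0]]) u z ^+ 2.
    rewrite big_map big_filter mulr_sumr [RHS]big_mkcond; apply: eq_bigr => w _.
    by case: (w + unitv i \in F0); rewrite ?mulr0.
  rewrite ler_pM2l //; apply: hF1.
    by rewrite map_inj_uniq; [exact: filter_uniq| move=> x y /addIr].
  by move=> z /mapP[w]; rewrite mem_filter => /andP[/F1sub ? _] ->.
have I5 : \sum_(b <- S) a b * grad u b ^+ 2 <= \sum_(w <- L) \sum_(i < d) k (w, i).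
  rewrite -(@big_allpairs R 0 +%R _ _ L (index_enum 'I_d) k).
  rewrite (@eq_big_seq _ _ _ _ _ _ k); last first.
    move=> b bS; have [hx hy] := PS _ bS.
    by rewrite /k (PB1 _ hx) (PB1 _ hy).
  apply: sub_sum => //.
    case=> w i bS; have [hx _] := PS _ bS.
    by apply: (allpairs_f (@pair _ _)); [exact: PL1 (PB1 _ hx)| exact: mem_index_enum].
  move=> b _; rewrite /k; case: ifP => // _.
  by apply: mulr_ge0 => //; exact: sqr_ge0.
have W : g = \sum_(z <- B) u z * (T^-1 * u z) +
    \sum_(i < d) \sum_(w <- L) a (w, i) * grad u (w, i) * (psi (w + unitv i) - psi w).
  by rewrite -I1 -I2 -big_split /=; apply: eq_bigr => z _; rewrite mulrDr.
have A0 : 0 <= \sum_(z <- B) u z * (T^-1 * u z).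
  apply: sumr_ge0 => z _; rewrite mulrCA; apply: mulr_ge0.
    by rewrite invr_ge0 ltW.
  by rewrite -expr2 sqr_ge0.
have Hpen : \sum_(i < d) \sum_(w <- L) pen (w, i) <= 4 * d%:R * e.
  apply: le_trans (ler_sum _ (fun i _ => I4 i)) _.
  by rewrite sumr_const card_ord -mulr_natl; nra.
have Hk : \sum_(b <- S) a b * grad u b ^+ 2 <= \sum_(i < d) \sum_(w <- L) k (w, i).
  by rewrite exchange_big.
have Htau : \sum_(i < d) \sum_(w <- L) k (w, i) - \sum_(i < d) \sum_(w <- L) pen (w, i) <=
    \sum_(i < d) \sum_(w <- L) a (w, i) * grad u (w, i) * (psi (w + unitv i) - psi w).
  rewrite -sumrB; apply: ler_sum => i _; rewrite -sumrB; apply: ler_sum => w _; exact: I3.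
lra.
Qed.
End Energy.
Lemma expey (R : realType) n : ((+oo : \bar R) ^+ n.+1 = +oo)%E.
Proof. elim: n => // n IH. by rewrite expeS IH. Qed.

Lemma pow_ge (R : realType) (r : R) n : 1 <= r -> r <= r ^+ n.+1.
Proof.
move=> r1; rewrite exprS -[X in X <= _]mulr1; apply: ler_wpM2l; first lra.
exact: exprn_ege1.
Qed.

Lemma unitv_neq0 d (i : 'I_d) : unitv i != 0.
Proof.
apply/eqP => h; have := congr1 (fun M : 'rV[int]_d => M 0 i) h.
by rewrite /unitv !mxE !eqxx.
Qed.

Lemma key_real (R : realType) (al g r c E S : R) :
  0 <= al -> al <= 1 -> 0 <= c -> r = 1 - al * g ->
  al * g ^+ 2 + E <= g -> 0 <= E ->
  g <= `|g| -> `|g| <= S -> (0 < r -> 2 * S <= r * c + E / r) ->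
  1 + al / r - 2 <= c.
Proof.
move=> a0 a1 c0 hr hE E0 gg gS hS.
have [r0|rpos] := leP r 0.
  have : al / r <= 0 by apply: mulr_ge0_le0 => //; rewrite invr_le0.
  lra.
have := hS rpos.
have Er : E / r <= g.
  rewrite ler_pdivrMr //; rewrite hr; nra.
move=> h2.
have gc : g <= r * c by lra.
have : al <= r * (1 + c).
  have : 1 <= r + al * r * c by nra.
  nra.
move=> h3; have h4 : al / r <= 1 + c by rewrite ler_pdivrMr //; lra.
lra.
Qed.
Lemma amgm (R : realType) (al r w : R) : 0 < al -> 0 < r ->
  2 * `|w| <= r * al^-1 + al * w ^+ 2 / r.
Proof.
move=> a0 r0.
have hw : w ^+ 2 = `|w| ^+ 2 by rewrite real_normK // num_real.
rewrite hw; set t := `|w|.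
have an : al != 0 by rewrite gt_eqF.
have rn : r != 0 by rewrite gt_eqF.
have -> : r * al^-1 + al * t ^+ 2 / r = 2 * t + (r - al * t) ^+ 2 / (al * r).
  by field; rewrite an rn.
rewrite lerDl; apply: divr_ge0; first exact: sqr_ge0.
by apply: mulr_ge0; apply: ltW.
Qed.

Lemma amgm_sum (R : realType) (T : eqType) (s : seq T) (al w : T -> R) r :
  0 < r -> (forall x, x \in s -> 0 < al x) ->
  2 * \sum_(x <- s) `|w x| <=
  r * \sum_(x <- s) (al x)^-1 + (\sum_(x <- s) al x * w x ^+ 2) / r.
Proof.
move=> r0; elim: s => [|x s IH] hs; first by rewrite !big_nil; lra.
rewrite !big_cons mulrDr mulrDr mulrDl.
have h1 := @amgm R (al x) r (w x) (hs x (mem_head _ _)) r0.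
have h2 := IH (fun y ys => hs y (@mem_behead _ (x :: s) _ ys)).
lra.
Qed.
Theorem lemma9 (R : realType) (d : nat) :
  exists K : R, 0 < K /\
  forall (T : R) (a : bond d -> R) (G : 'rV[int]_d -> 'rV[int]_d -> R) (b : bond d),
    0 < T -> in_Omega a -> is_green T a G ->
    ((1 + a b / (1 - a b * gradgradG G b))%:E <= K%:E * omega0 a b ^+ 2)%E.
Proof.
exists 3; split; first lra.
move=> T a G b T0 hO hG.
have a0 : forall b', 0 <= a b' by move=> b'; case/andP: (hO b').
have a1 : forall b', a b' <= 1 by move=> b'; case/andP: (hO b').
pose x0 := xb b. pose y0 := yb b.
pose u z := G z y0 - G z x0.
have hg : gradgradG G b = u y0 - u x0 by rewrite /gradgradG /u /x0 /y0; ring.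
have heq : forall z, T^-1 * u z + divstar (fun b' => a b' * grad u b') z =
     (if z == y0 then 1 else 0) - (if z == x0 then 1 else 0).
  move=> z; have [_ e1] := hG y0; have [_ e2] := hG x0.
  rewrite -(e1 z) -(e2 z) /divstar /grad /u.
  have -> : forall p q r s : R, (p + q) - (r + s) = (p - r) + (q - s) by move=> *; ring.
  rewrite -sumrB; congr (_ + _); first by ring.
  by apply: eq_bigr => i _; ring.
have tl : forall e, 0 < e -> exists F : seq 'rV[int]_d, forall M, uniq M ->
     (forall z, z \in M -> z \notin F) -> \sum_(z <- M) u z ^+ 2 <= e.
  move=> e e0.
  have e40 : 0 < e / 4 by rewrite divr_gt0.
  have [F1 h1] := @tail_esum R _ (fun z => G z y0 ^+ 2) (fun z => sqr_ge0 _) (hG y0).1 _ e40.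
  have [F2 h2] := @tail_esum R _ (fun z => G z x0 ^+ 2) (fun z => sqr_ge0 _) (hG x0).1 _ e40.
  exists (F1 ++ F2) => M uM dis.
  have d1 : forall z, z \in M -> z \notin F1.
    by move=> z zM; have := dis z zM; rewrite mem_cat negb_or => /andP[].
  have d2 : forall z, z \in M -> z \notin F2.
    by move=> z zM; have := dis z zM; rewrite mem_cat negb_or => /andP[].
  have := h1 M uM d1; have := h2 M uM d2.
  have : \sum_(z <- M) u z ^+ 2 <= 2 * \sum_(z <- M) G z y0 ^+ 2 + 2 * \sum_(z <- M) G z x0 ^+ 2.
    rewrite !mulr_sumr -big_split /=; apply: ler_sum => z _; rewrite /u.
    have := sqr_ge0 (G z y0 + G z x0); nra.
  lra.
have En := @energy R d T a u x0 y0 T0 hO heq tl.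
rewrite hg.
set g := u y0 - u x0.
set V := 1 + a b / (1 - a b * g).
rewrite /omega0 /omega.
set D := dist_a (zero_at a b) (xb b) (yb b).
have za0 : forall b', 0 <= zero_at a b b' by move=> b'; rewrite /zero_at; case: ifP.
have hD1 : (1%:E <= D)%E.
  rewrite /D; apply/ereal_infP => c [s [w ->]].
  case: (@costE R d (zero_at a b) s za0) => [->|[nz ->]]; first exact: leey.
  rewrite lee_fin.
  case: s w nz => [|c0 s] /= w nz.
    move: (@unitv_neq0 d b.2); rewrite /yb /xb in w.
    by move=> /eqP []; apply: (@addrI _ b.1); rewrite addr0 -w.
  rewrite big_cons.
  have c00 : 0 < zero_at a b c0 by rewrite lt_def nz ?mem_head // za0.
  have c01 : zero_at a b c0 <= 1 by rewrite /zero_at; case: ifP.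
  have : 1 <= (zero_at a b c0)^-1 by rewrite invf_ge1.
  have : 0 <= \sum_(b' <- s) (zero_at a b b')^-1 by apply: sumr_ge0 => b' _; rewrite invr_ge0.
  lra.
have hDV : ((V - 2)%:E <= D)%E.
  rewrite /D; apply/ereal_infP => c [s [w ->]].
  case: (@costE R d (zero_at a b) s za0) => [->|[nz ->]]; first exact: leey.
  rewrite lee_fin.
  have [s' [w' us' sub']] := @walk_erase d _ _ _ w.
  apply: le_trans (@sub_sum R _ _ s' s us' sub' _); last by move=> x _; rewrite invr_ge0.
  have nz' : forall b', b' \in s' -> zero_at a b b' != 0 by move=> b' /sub'; exact: nz.
  have nb : b \notin s'.
    by apply/negP => /nz'; rewrite /zero_at eqxx eqxx.
  have za : forall b', b' \in s' -> zero_at a b b' = a b'.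
    move=> b' bs; rewrite /zero_at; case: eqP => // eb; by subst; rewrite bs in nb.
  rewrite (eq_big_seq (fun b' => (a b')^-1)); last by move=> b' bs; rewrite za.
  have apos : forall b', b' \in s' -> 0 < a b'.
    by move=> b' bs; rewrite lt_def -(za _ bs) nz' // (za _ bs) a0.
  have ub : uniq (b :: s') by rewrite /= nb us'.
  have Eb := En (b :: s') ub.
  rewrite big_cons in Eb.
  have gb : grad u b = g by [].
  rewrite gb in Eb.
  apply: (@key_real R (a b) g (1 - a b * g) _ (\sum_(b' <- s') a b' * grad u b' ^+ 2)
            (\sum_(b' <- s') `|grad u b'|)) => //.
  - by apply: sumr_ge0 => b' _; rewrite invr_ge0.
  - by apply: sumr_ge0 => b' _; apply: mulr_ge0 => //; exact: sqr_ge0.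
  - exact: ler_norm.
  - exact: (@walk_tel R d u _ _ _ w').
  - by move=> r0; apply: amgm_sum.
clearbody D; move: D hD1 hDV => [r| |] h1 h2.
- rewrite lee_fin in h1; move: h2; rewrite lee_fin => h2; rewrite -!EFin_expe -EFinM lee_fin.
  have p1 := @pow_ge R r d.+1 h1.
  have p2 := @pow_ge R (r ^+ d.+2) 1 (le_trans h1 p1).
  lra.
- by rewrite !expey mulry gtr0_sg // mul1e leey.
- by move: h1; rewrite leeNy_eq.
Qed.
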